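(* Fix $n\ge1$ and $r\in[n]$. For each permutation $\pi$ of $[n]$ define the polynomial in the $n^2$ variables $x=[x_{i,j}]$ $$P_\pi(x)=\prod_{i=1}^n x_{i,\pi(i)}\sum_{T\in\mathcal{T}_r(n)}\prod_{(u,v)\in T}x_{u,\pi(v)}.$$ Then for every $x\in\mathcal{B}_n$, $$\sum_{\pi\in S_n}(\pi-x)\,P_\pi(x)=0,$$ where each permutation $\pi$ is identified with its $n\times n$ permutation matrix (entry $(i,j)$ equal to $1$ if $j=\pi(i)$ and $0$ otherwise).
   Context: $S_n$ is the set of permutations of $[n]$. $\mathcal{B}_n$ is the set of $n\times n$ doubly stochastic matrices (nonnegative entries, rows and columns summing to $1$). An arborescence rooted at $r$ on vertex set $[n]$ is a set $T$ of directed edges $(u,v)$ (meaning $u\to v$) on $[n]$ such that from every vertex there is exactly one directed path to $r$; $\mathcal{T}_r(n)$ is the set of all such arborescences. *)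

(* Defs.v *)
From HB Require Import structures.
From mathcomp Require Import all_boot all_order all_algebra all_fingroup.
From mathcomp Require Import boolp.
Set Implicit Arguments. Unset Strict Implicit. Unset Printing Implicit Defensive.
Import Order.TTheory GRing.Theory Num.Theory.
Local Open Scope ring_scope.

(* Vertex set [n] is 'I_n; a directed edge (u,v) means u -> v. *)

Definition doubly_stochastic (R : realFieldType) (n : nat) (x : 'M[R]_n) : Prop :=
  (forall i j, 0 <= x i j) /\
  (forall i, \sum_(j < n) x i j = 1) /\
  (forall j, \sum_(i < n) x i j = 1).

Definition is_arborescence (n : nat) (r : 'I_n) (T : {set 'I_n * 'I_n}) : Prop :=
  forall v : 'I_n,
    exists! p : seq 'I_n, path (fun a b => (a, b) \in T) v p && (last v p == r).

Definition Ppoly (R : realFieldType) (n : nat) (r : 'I_n) (s : 'S_n)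
    (x : 'M[R]_n) : R :=
  (\prod_(i < n) x i (s i)) *
  \sum_(T : {set 'I_n * 'I_n} | `[< is_arborescence r T >])
     \prod_(e in T) x e.1 (s e.2).

(* Main.v *)
Require Import Defs.
From HB Require Import structures.
From mathcomp Require Import all_boot all_order all_algebra all_fingroup.
From mathcomp Require Import boolp.
From mathcomp Require Import ring.
Set Implicit Arguments. Unset Strict Implicit. Unset Printing Implicit Defensive.
Import Order.TTheory GRing.Theory Num.Theory.


Section Iter.
Variable T : finType.
Local Notation N := #|T|.

Definition upd (f : {ffun T -> T}) x z : {ffun T -> T} :=
  [ffun v => if v == x then z else f v].

Lemma iter_fix (f : T -> T) a k : f a = a -> iter k f a = a.
Proof. by move=> fa; elim: k => //= k ->. Qed.

Lemma absorb (f : T -> T) a v k m : f a = a -> iter k f v = a -> k <= m -> iter m f v = a.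
Proof. by move=> fa hk km; rewrite -(subnK km) iterD hk iter_fix. Qed.

Lemma pig (f : T -> T) a v k : f a = a -> iter k f v = a -> iter N f v = a.
Proof.
move=> fa hk; have c : fconnect f v a by rewrite -hk fconnect_iter.
apply: (absorb fa (iter_findex c)); apply: ltnW; apply: leq_trans (findex_max c) _.
exact: max_card.
Qed.

Lemma cyc (f : T -> T) a x k : f a = a -> iter k.+1 f x = x -> iter N f x = a -> x = a.
Proof.
move=> fa hk hN.
have H : forall m, iter (m * k.+1) f x = x.
  by elim=> // m IH; rewrite mulSn iterD IH hk.
rewrite -(H N); apply: (absorb fa hN); exact: leq_pmulr.
Qed.

Lemma iter_agree (f g : T -> T) v k :
  (forall m, m < k -> f (iter m f v) = g (iter m f v)) -> iter k g v = iter k f v.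
Proof.
elim: k => //= k IH H; rewrite IH; first by rewrite H.
by move=> m hm; apply: H; apply: ltnW.
Qed.

Lemma upd_avoid (f : {ffun T -> T}) x z v k : (forall m, m < k -> iter m f v != x) ->
  iter k (upd f x z) v = iter k f v.
Proof. by move=> H; apply: iter_agree => m hm; rewrite ffunE (negbTE (H m hm)). Qed.

Lemma upd_avoid_all (f : {ffun T -> T}) x z v k : (forall m, iter m f v != x) ->
  iter k (upd f x z) v = iter k f v.
Proof. by move=> H; apply: upd_avoid. Qed.

Lemma hit (f : {ffun T -> T}) x z v : (forall m, iter m f v != x) \/
   exists m, iter m f v = x /\ iter m (upd f x z) v = x.
Proof.
case: (boolP [exists m : 'I_N.+1, iter m f v == x]) => [/existsP Hex | Hn].
  right; have Hex' : exists m, iter m f v == x by case: Hex => m hm; exists m.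
  case: (ex_minnP Hex') => m /eqP hm hmin; exists m; split => //.
  rewrite upd_avoid // => m' hm'; apply/negP => /eqP e.
  by have := hmin m' (introT eqP e); rewrite leqNgt hm'.
left => m; apply/negP => /eqP e.
case: (boolP (fconnect f v x)) => [c|].
  have hl : findex f v x < N.+1 by apply: ltnW; apply: leq_trans (findex_max c) (max_card _).
  move: Hn; rewrite negb_exists => /forallP /(_ (Ordinal hl)).
  by rewrite /= iter_findex // eqxx.
by rewrite -e fconnect_iter.
Qed.

Lemma upd_upd (f : {ffun T -> T}) x a b : upd (upd f x a) x b = upd f x b.
Proof. by apply/ffunP => v; rewrite !ffunE; case: eqP. Qed.

Lemma upd_id (f : {ffun T -> T}) x : upd f x (f x) = f.
Proof. by apply/ffunP => v; rewrite !ffunE; case: eqP => // ->. Qed.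

End Iter.

Local Open Scope ring_scope.

Section Forest.
Variable T : finType.
Local Notation N := #|T|.

Definition treeb (r : T) (p : {ffun T -> T}) :=
  (p r == r) && [forall v, iter N p v == r].

Definition forest2 (r s : T) (F : {ffun T -> T}) :=
  [&& F r == r, F s == s & [forall v, (iter N F v == r) || (iter N F v == s)]].

Lemma forest2C r s F : forest2 r s F = forest2 s r F.
Proof.
rewrite /forest2 andbCA; congr (_ && (_ && _)).
by apply: eq_forallb => v; rewrite orbC.
Qed.

Lemma tree_upd_forest r s (F : {ffun T -> T}) w : r != s -> F r = r ->
  treeb s (upd F r w) -> forest2 r s F && (iter N F w == s).
Proof.
move=> rs Fr /andP [/eqP ps /forallP pt].
have Fs : F s = s by move: ps; rewrite ffunE eq_sym (negbTE rs).
have psf : (upd F r w) s = s by [].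
rewrite /forest2 Fr Fs !eqxx /=; apply/andP; split.
  apply/forallP => v; case: (hit F r w v) => [av | [m [hm _]]].
    by rewrite -(upd_avoid_all w _ av) pt orbT.
  by rewrite (pig Fr hm) eqxx.
case: (hit F r w w) => [av | [m [_ hm]]].
  by rewrite -(upd_avoid_all w _ av) pt.
have e : iter m.+1 (upd F r w) w = w by rewrite iterS hm ffunE eqxx.
by rewrite (cyc psf e (eqP (pt w))) iter_fix.
Qed.

Lemma forest_upd_tree r s (F : {ffun T -> T}) w : r != s ->
  forest2 r s F -> iter N F w = s -> treeb s (upd F r w).
Proof.
move=> rs /and3P [/eqP Fr /eqP Fs /forallP Fv] Fw.
have ps : (upd F r w) s = s by rewrite ffunE eq_sym (negbTE rs).
rewrite /treeb ps eqxx /=; apply/forallP => v.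
have aw : forall m, iter m F w != r.
  move=> m; apply/negP => /eqP e.
  have := absorb Fr e (leq_addr N m); rewrite iterD Fw iter_fix // => e2.
  by move: rs; rewrite e2 eqxx.
case: (hit F r w v) => [av | [m [_ hm]]].
  rewrite upd_avoid_all //; case/orP: (Fv v) => // /eqP e.
  by move: (av N); rewrite e eqxx.
apply/eqP; apply: (pig (k := N + m.+1) ps).
by rewrite iterD iterS hm ffunE eqxx upd_avoid_all.
Qed.

Lemma forest_swap r s (F : {ffun T -> T}) b a : r != s -> forest2 r s F ->
  b != s -> iter N F b = s -> iter N F a = r ->
  [/\ forest2 r s (upd F b a), b != r, iter N (upd F b a) b = r &
      iter N (upd F b a) (F b) = s].
Proof.
move=> rs /and3P [/eqP Fr /eqP Fs /forallP Fv] bs Fb Fa.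
have br : b != r.
  by apply/negP => /eqP e; move: Fb; rewrite e iter_fix // => e2; move: rs; rewrite e2 eqxx.
set G := upd F b a.
have Gr : G r = r by rewrite ffunE eq_sym (negbTE br).
have Gs : G s = s by rewrite ffunE eq_sym (negbTE bs).
have aa : forall m, iter m F a != b.
  move=> m; apply/negP => /eqP e.
  have := absorb Fr Fa (leq_addr m N); rewrite iterD e Fb => e2.
  by move: rs; rewrite e2 eqxx.
have ac : forall m, iter m F (F b) != b.
  move=> m; apply/negP => /eqP e.
  have e1 : iter m.+1 F b = b by rewrite iterSr.
  by move: bs; rewrite (cyc Fs e1 Fb) eqxx.
have Gb : iter N G b = r.
  apply: (pig (k := N.+1) Gr); rewrite iterSr /G ffunE eqxx.
  by rewrite /G upd_avoid_all.
have Gc : iter N G (F b) = s.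
  rewrite /G upd_avoid_all // -iterSr; exact: absorb Fs Fb (leqnSn _).
split => //.
rewrite /forest2 Gr Gs !eqxx /=; apply/forallP => v.
case: (hit F b a v) => [av | [m [_ hm]]].
  by rewrite /G upd_avoid_all.
have : iter (N + m) G v = r by rewrite iterD hm.
by move/(pig Gr) => ->; rewrite eqxx.
Qed.

End Forest.


Section RI.
Variable K : comRingType.
Variable T : finType.
Local Notation N := #|T|.
Implicit Types (y : T -> T -> K) (F : {ffun T -> T}).

Definition tsum y r := \sum_(p | treeb r p) \prod_(u | u != r) y u (p u).
Definition wtF r s y F := \prod_(u | (u != r) && (u != s)) y u (F u).

Lemma wtFC r s y F : wtF r s y F = wtF s r y F.
Proof. by apply: eq_bigl => u; rewrite andbC. Qed.

Lemma claim1 r s y : r != s ->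
  tsum y s = \sum_(F | forest2 r s F) wtF r s y F * \sum_(w | iter N F w == s) y r w.
Proof.
move=> rs; rewrite /tsum.
rewrite (reindex_onto (fun q : {ffun T -> T} * T => upd q.1 r q.2)
                     (fun p => (upd p r r, p r))) /=; last first.
  by move=> p _; rewrite upd_upd upd_id.
transitivity (\sum_(q | forest2 r s q.1 && (iter N q.1 q.2 == s)) wtF r s y q.1 * y r q.2).
  apply: eq_big => [[F w] | [F w]] /=.
    rewrite upd_upd ffunE eqxx.
    case: (boolP (F r == r)) => [/eqP Fr | Fr].
      have -> : upd F r r = F by rewrite -{2}(upd_id F r) Fr.
      rewrite eqxx andbT; apply/idP/idP.
        exact: tree_upd_forest.
      by case/andP => hf /eqP hw; apply: forest_upd_tree.
    have -> : (upd F r r, w) == (F, w) = false.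
      rewrite xpair_eqE eqxx andbT.
      apply/negP => /eqP /ffunP /(_ r); rewrite ffunE eqxx => e.
      by move: Fr; rewrite -e eqxx.
    by rewrite andbF; apply/esym/negP => /andP [/and3P [/eqP e _ _] _]; move: Fr; rewrite e eqxx.
  move=> _; rewrite (bigD1 r) /=; last by [].
  rewrite ffunE eqxx mulrC.
  congr (_ * _).
  apply: eq_big => [u | u /andP [_ ur]].
    by rewrite andbC.
  by rewrite ffunE (negbTE ur).
rewrite -(pair_big_dep (fun F => forest2 r s F) (fun F w => iter N F w == s)
   (fun F w => wtF r s y F * y r w)).
by apply: eq_bigr => F _; rewrite mulr_sumr.
Qed.

Definition iota_sw (q : {ffun T -> T} * T * T) : {ffun T -> T} * T * T :=
  (upd q.1.1 q.1.2 q.2, q.1.2, q.1.1 q.1.2).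

Lemma iota_swK : involutive iota_sw.
Proof.
move=> [[F b] a]; rewrite /iota_sw /= upd_upd upd_id ffunE eqxx //.
Qed.

Definition PB r s (q : {ffun T -> T} * T * T) :=
  [&& forest2 r s q.1.1, q.1.2 != s, iter N q.1.1 q.1.2 == s & iter N q.1.1 q.2 == r].

Lemma PB_iota r s q : r != s -> PB r s q -> PB s r (iota_sw q).
Proof.
case: q => [[F b] a] rs /and4P [hf bs /eqP hb /eqP ha].
have [hf' br hb' hc] := forest_swap rs hf bs hb ha.
by rewrite /PB /= -forest2C hf' br hb' hc !eqxx.
Qed.

Lemma PB_iotaE r s q : r != s -> PB s r (iota_sw q) = PB r s q.
Proof.
move=> rs; apply/idP/idP; last exact: PB_iota.
by move/(PB_iota (r:=s) (s:=r)); rewrite iota_swK; apply; rewrite eq_sym.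
Qed.

Definition wq r s y (q : {ffun T -> T} * T * T) := wtF r s y q.1.1 * y q.1.2 q.2.

Lemma wq_iota r s y q : q.1.2 != r -> q.1.2 != s -> wq r s y (iota_sw q) = wq r s y q.
Proof.
case: q => [[F b] a] /= br bs; rewrite /wq /wtF /=.
rewrite (bigD1 b) /=; last by rewrite br bs.
rewrite [in RHS](bigD1 b) /=; last by rewrite br bs.
rewrite ffunE eqxx.
have -> : \prod_(u | ((u != r) && (u != s)) && (u != b)) y u (upd F b a u) =
   \prod_(u | ((u != r) && (u != s)) && (u != b)) y u (F u).
  by apply: eq_bigr => u /andP [_ ub]; rewrite ffunE (negbTE ub).
by rewrite mulrAC [RHS]mulrAC [y b a * _]mulrC.
Qed.

Lemma claim3 r s y : r != s ->
  \sum_(q | PB r s q) wq r s y q = \sum_(q | PB s r q) wq r s y q.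
Proof.
move=> rs; rewrite [RHS](reindex_inj (inv_inj iota_swK)).
apply: eq_big => q; first by rewrite PB_iotaE.
case: q => [[F b] a]; rewrite /PB /= => /and4P [hf bs /eqP hb _].
have br : b != r.
  apply/negP => /eqP e; move: hb; rewrite e.
  case/and3P: hf => /eqP Fr _ _; rewrite iter_fix // => e2.
  by move: rs; rewrite e2 eqxx.
by rewrite wq_iota.
Qed.

End RI.


Section RI2.
Variable K : comRingType.
Variable T : finType.
Local Notation N := #|T|.
Implicit Types (y : T -> T -> K) (F : {ffun T -> T}).

Lemma claim2 r s y F : r != s -> forest2 r s F ->
  (forall v, \sum_w y v w = \sum_w y w v) ->
  \sum_(b | iter N F b == r) \sum_(a | iter N F a == s) y b a =
  \sum_(b | iter N F b == s) \sum_(a | iter N F a == r) y b a.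
Proof.
move=> rs /and3P [_ _ /forallP Fv] hyp.
have nA : forall v, (iter N F v == s) = ~~ (iter N F v == r).
  move=> v; case/orP: (Fv v) => /eqP ->; rewrite eqxx ?(negbTE rs) //.
  by rewrite eq_sym (negbTE rs).
have H : \sum_(a | iter N F a == r) \sum_w y a w = \sum_(a | iter N F a == r) \sum_w y w a.
  by apply: eq_bigr => a _; apply: hyp.
have E1 : \sum_(b | iter N F b == r) \sum_(a | iter N F a == s) y b a =
   \sum_(b | iter N F b == r) \sum_(a | ~~ (iter N F a == r)) y b a.
  by apply: eq_bigr => b _; apply: eq_bigl => a; rewrite nA.
have E2 : \sum_(b | iter N F b == s) \sum_(a | iter N F a == r) y b a =
   \sum_(b | ~~ (iter N F b == r)) \sum_(a | iter N F a == r) y b a.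
  by apply: eq_bigl => b; rewrite nA.
rewrite E1 E2 [RHS]exchange_big /=.
move: H.
rewrite (eq_bigr (fun a => \sum_(w | iter N F w == r) y a w + \sum_(w | ~~ (iter N F w == r)) y a w)); last by move=> a _; rewrite (bigID (fun w => iter N F w == r)).
rewrite [in X in _ = X -> _](eq_bigr (fun a => \sum_(w | iter N F w == r) y w a + \sum_(w | ~~ (iter N F w == r)) y w a)); last by move=> a _; rewrite (bigID (fun w => iter N F w == r)).
rewrite !big_split /= [X in _ = X + _ -> _]exchange_big /=.
by move/addrI.
Qed.

Lemma triple_sum (G : {ffun T -> T} -> T -> T -> K) (P1 : pred {ffun T -> T})
  (P2 P3 : {ffun T -> T} -> pred T) :
  \sum_(q | [&& P1 q.1.1, P2 q.1.1 q.1.2 & P3 q.1.1 q.2]) G q.1.1 q.1.2 q.2 =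
  \sum_(F | P1 F) \sum_(b | P2 F b) \sum_(a | P3 F a) G F b a.
Proof.
rewrite (pair_big_dep P1 P2 (fun F b => \sum_(a | P3 F a) G F b a)) /=.
rewrite (pair_big_dep (fun Fb : {ffun T -> T} * T => P1 Fb.1 && P2 Fb.1 Fb.2)
   (fun Fb a => P3 Fb.1 a) (fun Fb a => G Fb.1 Fb.2 a)) /=.
by apply: eq_bigl => q; rewrite andbA.
Qed.

Lemma RI r s y : (forall v, \sum_w y v w = \sum_w y w v) -> tsum y r = tsum y s.
Proof.
move=> hyp; case: (eqVneq r s) => [-> // | rs].
pose lim F v := iter N F v.
pose X1 F := \sum_(w | lim F w == s) y r w.
pose X2 F := \sum_(w | lim F w == r) y s w.
pose YB F := \sum_(b | (b != s) && (lim F b == s)) \sum_(a | lim F a == r) y b a.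
pose YA F := \sum_(b | (b != r) && (lim F b == r)) \sum_(a | lim F a == s) y b a.
have c3 : \sum_(F | forest2 r s F) wtF r s y F * YB F =
          \sum_(F | forest2 r s F) wtF r s y F * YA F.
  have := claim3 y rs; rewrite /wq.
  rewrite (eq_bigl (fun q => [&& forest2 r s q.1.1, (q.1.2 != s) && (iter N q.1.1 q.1.2 == s)
     & iter N q.1.1 q.2 == r])); last by move=> q; rewrite /PB !andbA.
  rewrite [in X in _ = X -> _](eq_bigl (fun q => [&& forest2 r s q.1.1, (q.1.2 != r) && (iter N q.1.1 q.1.2 == r)
     & iter N q.1.1 q.2 == s])); last by move=> q; rewrite /PB !andbA forest2C.
  rewrite (triple_sum (fun F b a => wtF r s y F * y b a) (fun F => forest2 r s F)
     (fun F b => (b != s) && (iter N F b == s)) (fun F a => iter N F a == r)) /=.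
  rewrite (triple_sum (fun F b a => wtF r s y F * y b a) (fun F => forest2 r s F)
     (fun F b => (b != r) && (iter N F b == r)) (fun F a => iter N F a == s)) /= => E.
  transitivity (\sum_(F | forest2 r s F) \sum_(b | (b != s) && (iter N F b == s))
      \sum_(a | iter N F a == r) wtF r s y F * y b a).
    by apply: eq_bigr => F _; rewrite /YB mulr_sumr; apply: eq_bigr => b _; rewrite mulr_sumr.
  rewrite E.
  by apply: eq_bigr => F _; rewrite /YA mulr_sumr; apply: eq_bigr => b _; rewrite mulr_sumr.
have lr : forall F, forest2 r s F -> lim F r == r.
  by move=> F /and3P [/eqP Fr _ _]; rewrite /lim iter_fix.
have ls : forall F, forest2 r s F -> lim F s == s.
  by move=> F /and3P [_ /eqP Fs _]; rewrite /lim iter_fix.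
have c2 : forall F, forest2 r s F -> X1 F + YA F = X2 F + YB F.
  move=> F hF.
  have h1 : X1 F + YA F = \sum_(b | lim F b == r) \sum_(a | lim F a == s) y b a.
    rewrite [RHS](bigD1 r) /=; last exact: lr.
    by congr (_ + _); apply: eq_bigl => b; rewrite andbC.
  have h2 : X2 F + YB F = \sum_(b | lim F b == s) \sum_(a | lim F a == r) y b a.
    rewrite [RHS](bigD1 s) /=; last exact: ls.
    by congr (_ + _); apply: eq_bigl => b; rewrite andbC.
  by rewrite h1 h2; apply: claim2.
have e1 : tsum y s = \sum_(F | forest2 r s F) wtF r s y F * X1 F by apply: claim1.
have e2 : tsum y r = \sum_(F | forest2 r s F) wtF r s y F * X2 F.
  rewrite (claim1 y (r := s) (s := r)); last by rewrite eq_sym.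
  by apply: eq_big => F; [rewrite forest2C | rewrite wtFC].
apply: (@addIr _ (\sum_(F | forest2 r s F) wtF r s y F * YA F)).
rewrite e1 e2 -{1}c3 -!big_split /=.
by apply: eq_bigr => F hF; rewrite -!mulrDr c2.
Qed.

End RI2.


Section Arb.
Variable n : nat.
Variable r : 'I_n.
Local Notation T := ('I_n).

Definition Eset (p : {ffun T -> T}) : {set T * T} :=
  (fun u => (u, p u)) @: [set u | u != r].

Lemma memE (p : {ffun T -> T}) a b : ((a, b) \in Eset p) = (a != r) && (b == p a).
Proof.
apply/imsetP/andP => [[u] | [ar /eqP ->]].
  by rewrite inE => ur [-> ->].
by exists a; rewrite // inE.
Qed.

Lemma path_E (p : {ffun T -> T}) v q : path (fun a b => (a, b) \in Eset p) v q ->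
  q = traject p (p v) (size q) /\ forall i, (i < size q)%N -> iter i p v != r.
Proof.
elim: q v => [|w q IH] v //=.
case/andP; rewrite memE => /andP [vr /eqP ->] /IH [e1 e2]; split.
  by congr (_ :: _).
by case=> [|i] hi //=; rewrite -iterS iterSr; apply: e2.
Qed.

Lemma traj_path (p : {ffun T -> T}) v k : (forall i, (i < k)%N -> iter i p v != r) ->
  path (fun a b => (a, b) \in Eset p) v (traject p (p v) k).
Proof.
elim: k v => [|k IH] v H //=.
rewrite memE eqxx andbT (H 0) //=; apply: IH => i hi.
by rewrite -iterSr; apply: H.
Qed.

Lemma tree_arb (p : {ffun T -> T}) : treeb r p -> is_arborescence r (Eset p).
Proof.
case/andP => /eqP pr /forallP pt v.
have ex : exists k, iter k p v == r by exists #|T|; exact: pt.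
case: (ex_minnP ex) => k /eqP hk hmin.
have av : forall i, (i < k)%N -> iter i p v != r.
  move=> i hi; apply/negP => /hmin; rewrite leqNgt hi //.
exists (traject p (p v) k); split.
  by rewrite traj_path // last_traject hk eqxx.
move=> q /andP [hq /eqP hl]; have [e1 e2] := path_E hq.
have hs : iter (size q) p v = r by rewrite -hl [in RHS]e1 last_traject.
have sk : size q = k.
  apply/eqP; rewrite eqn_leq hmin ?hs ?eqxx // andbT leqNgt.
  by apply/negP => /e2; rewrite hk eqxx.
by rewrite {1}e1 sk.
Qed.

Definition decode (E : {set T * T}) : {ffun T -> T} :=
  [ffun u => if u == r then r else odflt r [pick w | (u, w) \in E]].

Lemma arb_E (E : {set T * T}) : is_arborescence r E -> Eset (decode E) = E.
Proof.
move=> A.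
have key : forall u w, (u, w) \in E -> (u != r) /\ (forall w', (u, w') \in E -> w' = w).
  move=> u w uw.
  have [qw [/andP [pw lw] _]] := A w.
  have pu : path (fun a b => (a, b) \in E) u (w :: qw) && (last u (w :: qw) == r).
    by rewrite /= uw pw.
  have [q0 [_ U]] := A u.
  split.
    apply/negP => /eqP ur.
    have h1 := U _ pu.
    have h2 : q0 = [::] by apply: U; rewrite /= ur eqxx.
    by move: h1; rewrite h2.
  move=> w' uw'.
  have [qw' [/andP [pw' lw'] _]] := A w'.
  have pu' : path (fun a b => (a, b) \in E) u (w' :: qw') && (last u (w' :: qw') == r).
    by rewrite /= uw' pw'.
  by have := U _ pu; rewrite (U _ pu') => -[].
apply/setP => [[a b]]; rewrite memE ffunE.
case: (boolP (a == r)) => [/eqP ar | ar] /=.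
  by apply/esym/negP => /key [] ; rewrite ar eqxx.
case: pickP => [w aw | none].
  apply/eqP/idP => [-> // | ab].
  by have [_ U] := key _ _ aw; apply: U.
exfalso.
have [q [/andP [pq lq] _]] := A a.
case: q pq lq => [|w q] /=; first by move=> _ /eqP e; move: ar; rewrite e eqxx.
by case/andP => aw _; move: (none w); rewrite aw.
Qed.

Lemma arb_sum (K : comRingType) (f : T * T -> K) :
  \sum_(E : {set T * T} | `[< is_arborescence r E >]) \prod_(e in E) f e =
  \sum_(p | treeb r p) \prod_(u | u != r) f (u, p u).
Proof.
rewrite (reindex_onto Eset decode); last by move=> E /asboolP; apply: arb_E.
apply: eq_big => p.
  apply/andP/idP => [[/asboolP A /eqP dp] | tp].
    have pr : p r = r by rewrite -dp ffunE eqxx.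
    rewrite /treeb pr eqxx /=; apply/forallP => v.
    have [q [/andP [pq /eqP lq] _]] := A v.
    have [e1 _] := path_E pq.
    apply/eqP; apply: (pig (k := size q) pr).
    by rewrite -lq [in RHS]e1 last_traject.
  split; first by apply/asboolP; apply: tree_arb.
  case/andP: tp => /eqP pr _.
  apply/eqP/ffunP => u; rewrite ffunE.
  case: (eqVneq u r) => [-> // | ur].
  case: pickP => [w | none] /=.
    by rewrite memE ur => /eqP.
  by move: (none (p u)); rewrite memE ur eqxx.
move=> _; rewrite big_imset /=; last by move=> u w _ _ [].
by apply: eq_bigl => u; rewrite inE.
Qed.

End Arb.


Section Alt.
Variable K : comRingType.
Variable T : finType.

Definition sgnS (U S : {set T}) : K := (-1) ^+ #|U :\: S|.

Lemma alt_sum (A U : {set T}) :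
  \sum_(S : {set T} | S \subset U) sgnS U S * (A \subset S)%:R = (A == U)%:R :> K.
Proof.
case: (boolP (U :\: A == set0)) => [UA | /set0Pn [e]]; last first.
  rewrite inE => /andP [eA eU].
  have AU : (A == U) = false by apply/negP => /eqP E; move: eA; rewrite E eU.
  rewrite AU.
  pose t (S : {set T}) := if e \in S then S :\ e else e |: S.
  have tK : involutive t.
    move=> S; rewrite /t; case: (boolP (e \in S)) => eS.
      by rewrite setD11 setD1K.
    by rewrite setU11 setU1K.
  rewrite (bigID (fun S : {set T} => e \in S)) /=.
  rewrite [X in X + _](reindex_inj (inv_inj tK)) /=.
  rewrite (eq_bigl (fun S : {set T} => (S \subset U) && (e \notin S))); last first.
    move=> S; rewrite /t; case: (boolP (e \in S)) => eS /=.
      by rewrite setD11 !andbF.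
    by rewrite !inE eqxx andbT subUset sub1set eU /= andbT.
  rewrite -big_split /=; apply: big1 => S /andP [SU eS].
  rewrite /t (negbTE eS) /sgnS.
  have c : #|U :\: S| = (#|U :\: (e |: S)|).+1.
    have E : U :\: S :\ e = U :\: (e |: S).
      by apply/setP => z; rewrite !inE; case: (z == e); rewrite ?andbF ?andbT //= andbC.
    by rewrite (cardsD1 e) inE eU eS /= add1n E.
  have sub : (A \subset e |: S) = (A \subset S).
    apply/idP/idP => h; last exact: (subset_trans h (subsetUr _ _)).
    apply/subsetP => z zA; have := subsetP h z zA; rewrite inE.
    by case/orP => // ez; move: eA; rewrite inE in ez; rewrite -(eqP ez) zA.
  by rewrite sub c exprS mulN1r mulNr addrN.
have UsA : U \subset A by rewrite -setD_eq0.
case: (boolP (A \subset U)) => AU.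
  have AU' : A = U by apply/eqP; rewrite eqEsubset AU UsA.
  rewrite AU' eqxx (bigD1 U) //= /sgnS setDv cards0 expr0 subxx mul1r big1 ?addr0 //.
  move=> S /andP [SU SnU]; rewrite [(U \subset S)]negbTE ?mulr0 //.
  by apply/negP => US; move: SnU; rewrite eqEsubset SU US.
have -> : (A == U) = false by apply/negP => /eqP E; move: AU; rewrite E subxx.
apply: big1 => S SU; rewrite [(A \subset S)]negbTE ?mulr0 //.
by apply/negP => AS; move: AU; rewrite (subset_trans AS SU).
Qed.

End Alt.


Section Phi.
Variable K : comRingType.
Variable n : nat.
Local Notation T := ('I_n).
Variable x : T -> T -> K.

Definition Gw (g : {ffun T -> T}) (phi : T -> T) j :=
  \prod_(c | c != j) (x (phi c) c * x (phi c) (g c)).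

Definition wS (S : {set T}) c d := \sum_(u in S) x u c * x u d.

Lemma imset_subE (f : T -> T) (A B : {set T}) :
  (f @: A \subset B) = [forall c, (c \in A) ==> (f c \in B)].
Proof.
apply/subsetP/forallP => [H c | H z /imsetP [c cA ->]].
  by apply/implyP => cA; apply: H; apply: imset_f.
by move/implyP: (H c); apply.
Qed.

Lemma expand (S : {set T}) (g : {ffun T -> T}) (r j : T) :
  \prod_(c | c != j) wS S c (g c) =
  \sum_(phi : {ffun T -> T}) ((phi j == r) && (phi @: [set~ j] \subset S))%:R * Gw g phi j.
Proof.
pose B (c u : T) : K := if c == j then (u == r)%:R else (u \in S)%:R * (x u c * x u (g c)).
have e1 : \prod_c \sum_u B c u = \prod_(c | c != j) wS S c (g c).
  rewrite (bigD1 j) //= {1}/B eqxx.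
  rewrite (bigD1 r) //= eqxx big1 ?addr0 ?mul1r; last by move=> u /negbTE ->.
  apply: eq_bigr => c /negbTE cj; rewrite /wS [RHS]big_mkcond /=.
  by apply: eq_bigr => u; rewrite /B cj; case: (u \in S); rewrite ?mul1r ?mul0r.
rewrite -e1 bigA_distr_bigA; apply: eq_bigr => phi _.
rewrite (bigD1 j) //= {1}/B eqxx.
have -> : \prod_(c | c != j) B c (phi c) =
   \prod_(c | c != j) ((phi c \in S)%:R * (x (phi c) c * x (phi c) (g c))).
  by apply: eq_bigr => c /negbTE cj; rewrite /B cj.
rewrite big_split /= /Gw -mulnb natrM mulrA; congr (_ * _ * _).
rewrite imset_subE.
case: (boolP [forall c, (c \in [set~ j]) ==> (phi c \in S)]) => [/forallP H | /forallPn [c]].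
  apply: big1 => c cj; have := H c; rewrite in_setC1 cj /= => ->; by [].
rewrite in_setC1 negb_imply => /andP [cj pc].
by rewrite (bigD1 c) //= (negbTE pc) mul0r.
Qed.

Lemma B3 (r j : T) :
  \sum_(S : {set T} | S \subset [set~ r]) sgnS K [set~ r] S * tsum (wS S) j =
  \sum_(g | treeb j g) \sum_(phi : {ffun T -> T} | (phi j == r) && (phi @: [set~ j] == [set~ r]))
     Gw g phi j.
Proof.
rewrite /tsum.
under eq_bigr => S _ do rewrite mulr_sumr.
rewrite exchange_big /=; apply: eq_bigr => g _.
under eq_bigr => S _ do rewrite (expand S g r j) mulr_sumr.
rewrite exchange_big /= [RHS]big_mkcond /=; apply: eq_bigr => phi _.
transitivity ((phi j == r)%:R * Gw g phi j *
   \sum_(S : {set T} | S \subset [set~ r]) sgnS K [set~ r] S * (phi @: [set~ j] \subset S)%:R).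
  rewrite mulr_sumr; apply: eq_bigr => S _; rewrite -mulnb natrM; ring.
rewrite alt_sum; case: (phi j == r); case: (_ == _); rewrite /= ?mul1r ?mulr1 ?mul0r ?mulr0 //.
Qed.

Lemma perm_imC (s : 'S_n) (j : T) : s @: [set~ j] = [set~ s j].
Proof.
apply/eqP; rewrite eqEcard card_imset; last exact: perm_inj.
rewrite !cardsC1 leqnn andbT; apply/subsetP => z /imsetP [c].
by rewrite !in_setC1 => cj ->; rewrite (inj_eq perm_inj).
Qed.

Lemma B2 (r j : T) (g : {ffun T -> T}) :
  \sum_(s : 'S_n | s j == r) Gw g s j =
  \sum_(phi : {ffun T -> T} | (phi j == r) && (phi @: [set~ j] == [set~ r])) Gw g phi j.
Proof.
rewrite [RHS](reindex_onto (fun s : 'S_n => pval s) (insubd (1%g : 'S_n))) /=; last first.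
  move=> phi /andP [/eqP pj /eqP im]; apply: insubdK.
  rewrite unfold_in; apply/injectiveP.
  have key : forall c, c != j -> phi c != r.
    move=> c cj; have : phi c \in phi @: [set~ j] by apply: imset_f; rewrite in_setC1.
    by rewrite im in_setC1.
  have inj : {in [set~ j] &, injective phi}.
    by apply/imset_injP; rewrite im !cardsC1.
  move=> a b e.
  case: (eqVneq a j) => [aj | aj]; case: (eqVneq b j) => [bj | bj].
  - by rewrite aj bj.
  - by move: (key b bj); rewrite -e aj pj eqxx.
  - by move: (key a aj); rewrite e bj pj eqxx.
  - by apply: inj; rewrite ?in_setC1.
apply: eq_big => s; last by rewrite pvalE.
rewrite valKd eqxx andbT pvalE.
case: (eqVneq (s j) r) => [sj | //]; by rewrite perm_imC sj eqxx.
Qed.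

Definition Phi (r j : T) := \sum_(s : 'S_n | s r == j)
  (\prod_(i | i != r) x i (s i)) * tsum (fun u v => x u (s v)) r.

Definition conjf (s : 'S_n) (g : {ffun T -> T}) : {ffun T -> T} :=
  [ffun i => s (g ((s^-1)%g i))].

Lemma conjf_iter s g k v : iter k (conjf s g) v = s (iter k g ((s^-1)%g v)).
Proof.
elim: k => [|k IH] /=; first by rewrite permKV.
by rewrite IH ffunE permK.
Qed.

Lemma conjfK s : cancel (conjf s) (conjf (s^-1)%g).
Proof. by move=> g; apply/ffunP => i; rewrite !ffunE invgK !permK. Qed.

Lemma conjfKV s : cancel (conjf (s^-1)%g) (conjf s).
Proof. by move=> g; apply/ffunP => i; rewrite !ffunE invgK !permKV. Qed.

Lemma treeb_conj (s : 'S_n) (r j : T) g : s j = r -> treeb r (conjf s g) = treeb j g.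
Proof.
move=> sj; have sr : (s^-1)%g r = j by rewrite -sj permK.
rewrite /treeb ffunE sr -{1}sj (inj_eq perm_inj); congr (_ && _).
apply/forallP/forallP => H c.
  by have := H (s c); rewrite conjf_iter permK -sj (inj_eq perm_inj).
by rewrite conjf_iter -sj (inj_eq perm_inj).
Qed.

Lemma B1 (r j : T) : Phi r j = \sum_(g | treeb j g) \sum_(s : 'S_n | s j == r) Gw g s j.
Proof.
rewrite /Phi /tsum.
under eq_bigr => s _ do rewrite mulr_sumr.
rewrite (reindex_inj (@invg_inj _ : injective (fun s : 'S_n => (s^-1)%g))) /=.
rewrite [RHS]exchange_big /=; apply: eq_big => s.
  by rewrite -(inj_eq (@perm_inj _ s)) permKV eq_sym.
move=> /eqP sj'; have sj : s j = r by rewrite -sj' permKV.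
rewrite (reindex (conjf s)) /=; last first.
  by exists (conjf (s^-1)%g) => g _; [apply: conjfK | apply: conjfKV].
apply: eq_big => g; first exact: treeb_conj.
move=> _; rewrite -big_split /= /Gw.
rewrite (reindex_inj (@perm_inj _ s)) /=.
apply: eq_big => c; first by rewrite -sj (inj_eq perm_inj).
by move=> _; rewrite ffunE !permK.
Qed.

Lemma Phi_const (r j k : T) : Phi r j = Phi r k.
Proof.
have E : forall j, Phi r j =
   \sum_(S : {set T} | S \subset [set~ r]) sgnS K [set~ r] S * tsum (wS S) j.
  by move=> j'; rewrite B1 B3; apply: eq_bigr => g _; apply: B2.
rewrite !E; apply: eq_bigr => S _; congr (_ * _); apply: RI => v.
by apply: eq_bigr => w _; rewrite /wS; apply: eq_bigr => u _; rewrite mulrC.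
Qed.

End Phi.


Unset Implicit Arguments.
Local Open Scope ring_scope.

Theorem proposition3p5 (R : realFieldType) (n : nat) (hn : (0 < n)%N)
    (r : 'I_n) (x : 'M[R]_n) :
  doubly_stochastic x ->
  \sum_(s : 'S_n) Ppoly r s x *: (perm_mx s - x) = 0.
Proof.
move=> [x0 [rows cols]].
pose xf := fun a b : 'I_n => x a b.
have Pp : forall (s : 'S_n) (i : 'I_n), Ppoly r s x =
    x i (s i) * ((\prod_(u | u != i) x u (s u)) * tsum (fun u v => xf u (s v)) i).
  move=> s i; rewrite /Ppoly (arb_sum r (fun e => x e.1 (s e.2))) /=.
  have -> : \sum_(p | treeb r p) \prod_(u | u != r) x u (s (p u)) =
            tsum (fun u v => xf u (s v)) r by [].
  rewrite (@RI _ _ r i); last first.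
    move=> v; rewrite /xf (reindex_inj (@perm_inj _ s^-1%g)) /=.
    under eq_bigr do rewrite permKV.
    by rewrite rows cols.
  by rewrite (bigD1 i) //= mulrA.
apply/matrixP => i j; rewrite summxE !mxE.
under eq_bigr do rewrite !mxE (Pp _ i).
pose Q := fun s : 'S_n => (\prod_(u | u != i) x u (s u)) * tsum (fun u v => xf u (s v)) i.
have hP : forall k, \sum_(s : 'S_n | s i == k) x i (s i) * Q s = x i k * Phi xf i k.
  by move=> k; rewrite /Phi mulr_sumr; apply: eq_bigr => s /eqP <-.
have tot : \sum_(s : 'S_n) x i (s i) * Q s = Phi xf i j.
  rewrite (partition_big (fun s : 'S_n => s i) xpredT) //=.
  under eq_bigr => k _ do rewrite hP (Phi_const xf i k j).
  by rewrite -mulr_suml rows mul1r.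
rewrite (eq_bigr (fun s : 'S_n => x i (s i) * Q s * (s i == j)%:R - (x i (s i) * Q s) * x i j)); last first.
  by move=> s _; rewrite mulrBr.
rewrite sumrB -mulr_suml tot.
have -> : \sum_(s : 'S_n) x i (s i) * Q s * (s i == j)%:R =
          \sum_(s : 'S_n | s i == j) x i (s i) * Q s.
  rewrite [RHS]big_mkcond; apply: eq_bigr => s _.
  by case: (s i == j); rewrite ?mulr1 ?mulr0.
by rewrite hP mulrC subrr.
Qed.
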